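(* Let $X\subseteq A^{\mathbb{N}}$ be a (one-sided) sofic shift over a finite alphabet $A$. Then the winning shift $W(X)\subseteq\{0,\dots,|A|-1\}^{\mathbb{N}}$ is weakly $1$-codable; if moreover $X$ is countable, then $W(X)$ is $1$-codable.
   Context: A sofic shift is the set of labels of right-infinite paths in a finite edge-labeled graph. Winning shift: for $X\subseteq A^{\mathbb{N}}$ and a choice sequence $\alpha=\alpha_0\alpha_1\cdots\in\{0,\dots,|A|-1\}^{\mathbb{N}}$, Alice and Bob play infinitely many rounds; in round $j$ Alice chooses $A_j\subseteq A$ with $|A_j|=\alpha_j+1$ and Bob chooses $a_j\in A_j$; Alice wins if $a_0a_1\cdots\in X$. $W(X)$ is the set of $\alpha$ for which Alice has a winning strategy. The ANS with language $0^*$ and radix order has $\mathrm{rep}(n)=0^n$; tuples are represented by left-padding with a new symbol $\#$; $Y\subseteq\mathbb{N}^d$ is $1$-recognizable if $\mathrm{rep}(Y)$ is regular. For $\mathbf{y}\in\mathbb{N}^{\mathbb{N}}$: $\sum\mathbf{y}=\sum_iy_i$; if finite, $\nu(\mathbf{y})$ is the unique nondecreasing tuple $(n_1,\dots,n_d)$ with $y_j=|\{k:n_k=j\}|$. The coding dimension of $Y\subseteq\mathbb{N}^{\mathbb{N}}$ is the least $d$ bounding $\sum\mathbf{y}$ on $Y$, if it exists. $Y$ is weakly $1$-codable if for each $k$ the set $\{\nu(\mathbf{y}):\mathbf{y}\in Y,\sum\mathbf{y}\le k\}$ is $1$-recognizable in each dimension, and $1$-codable if moreover its coding dimension is finite (here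 $W(X)$ is viewed with zero symbol $0$). *)

(* Defs.v *)
From mathcomp Require Import all_boot.
Set Implicit Arguments. Unset Strict Implicit. Unset Printing Implicit Defensive.

Definition path_labels (A V : finType) (E : V -> A -> V -> bool)
    (x : nat -> A) : Prop :=
  exists v : nat -> V, forall i, E (v i) (x i) (v i.+1).

Definition sofic (A : finType) (X : (nat -> A) -> Prop) : Prop :=
  exists (V : finType) (E : V -> A -> V -> bool),
    forall x, X x <-> path_labels E x.

Definition prefix (A : Type) (x : nat -> A) (j : nat) : seq A :=
  [seq x i | i <- iota 0 j].

(* A strategy of Alice maps Bob's previous choices a_0..a_{j-1} to A_j. *)
Definition alice_wins (A : finType) (X : (nat -> A) -> Prop)
    (alpha : nat -> nat) : Prop :=
  exists s : seq A -> {set A},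
    (forall h : seq A, #|s h| = (alpha (size h)).+1) /\
    (forall x : nat -> A, (forall j, x j \in s (prefix x j)) -> X x).

Definition W (A : finType) (X : (nat -> A) -> Prop) (alpha : nat -> nat)
    : Prop :=
  (forall j, alpha j < #|A|) /\ alice_wins X alpha.

Definition regular (S : finType) (L : seq S -> Prop) : Prop :=
  exists (Q : finType) (q0 : Q) (delta : Q -> S -> Q) (F : {set Q}),
    forall w, L w <-> foldl delta q0 w \in F.

(* Representation of a d-tuple (n_1..n_d) in the ANS with language 0^*,
   left-padded with #.  A letter is a column {ffun 'I_d -> bool}, where
   true encodes the symbol 0 and false encodes the padding symbol #.
   The word has length m = max n_i; position p (0-based) of component i
   is 0 iff p >= m - n_i. *)
Definition rep (d : nat) (t : d.-tuple nat) : seq {ffun 'I_d -> bool} :=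
  let m := \max_(i < d) tnth t i in
  [seq [ffun i => m - tnth t i <= p] | p <- iota 0 m].

Definition one_recognizable (d : nat) (Y : d.-tuple nat -> Prop) : Prop :=
  regular (fun w => exists t, Y t /\ rep t = w).

(* sum y <= k  (sum in N u {oo}) *)
Definition sum_le (y : nat -> nat) (k : nat) : Prop :=
  forall n, \sum_(i < n) y i <= k.

Definition is_nu (y : nat -> nat) (d : nat) (t : d.-tuple nat) : Prop :=
  sorted leq t /\ forall j, y j = count_mem j t.

Definition weakly_1_codable (Y : (nat -> nat) -> Prop) : Prop :=
  forall k d : nat,
    one_recognizable
      (fun t : d.-tuple nat => exists y, Y y /\ sum_le y k /\ is_nu y t).

Definition finite_coding_dimension (Y : (nat -> nat) -> Prop) : Prop :=
  exists d, forall y, Y y -> sum_le y d.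

Definition one_codable (Y : (nat -> nat) -> Prop) : Prop :=
  weakly_1_codable Y /\ finite_coding_dimension Y.

Definition countable_set (T : Type) (X : T -> Prop) : Prop :=
  exists f : nat -> T, forall x, X x -> exists n, f n = x.

(* Main.v *)
Require Import Defs.
From mathcomp Require Import all_boot.
From mathcomp Require Import zify.
From Stdlib Require Import ClassicalEpsilon Classical_Prop.
Require Import Defs.
Set Implicit Arguments. Unset Strict Implicit. Unset Printing Implicit Defensive.


Lemma prefixS (T : Type) (x : nat -> T) j : prefix x j.+1 = rcons (prefix x j) (x j).
Proof. exact: mkseqS. Qed.

Lemma size_prefix (T : Type) (x : nat -> T) j : size (prefix x j) = j.
Proof. exact: size_mkseq. Qed.

Lemma fin_stab (V : finType) (Q : V -> Prop) (P : nat -> V -> Prop) :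
  (forall n m v, n <= m -> P m v -> P n v) ->
  (forall n, exists v, Q v /\ P n v) -> exists v, Q v /\ forall n, P n v.
Proof.
move=> mono H; apply: NNPP => Hn.
have Hv : forall v, Q v -> exists n, ~ P n v.
  move=> v Qv; apply: NNPP => H1; apply: Hn; exists v; split=> // n.
  by apply: NNPP => H2; apply: H1; exists n.
have : forall l : seq V, exists N, forall v, v \in l -> Q v -> ~ P N v.
  elim=> [|v l [N HN]]; first by exists 0.
  case: (classic (Q v)) => Qv.
    have [n Hn'] := Hv v Qv.
    exists (maxn N n) => w; rewrite in_cons => /orP [/eqP -> | wl] Qw Pw.
      by apply: Hn'; apply: mono Pw; rewrite leq_maxr.
    by apply: (HN w wl Qw); apply: mono Pw; rewrite leq_maxl.
  exists N => w; rewrite in_cons => /orP [/eqP -> | wl] //; exact: HN.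
move=> /(_ (enum V)) [N HN]; have [v [Qv Pv]] := H N.
by apply: (HN v _ Qv Pv); rewrite mem_enum.
Qed.

Section Graph.
Variables (A V : finType) (E : V -> A -> V -> bool).

Definition dl (S : {set V}) (a : A) : {set V} := [set w | [exists v in S, E v a w]].
Definition St (h : seq A) := foldl dl setT h.

Lemma St_rcons h a : St (rcons h a) = dl (St h) a.
Proof. by rewrite /St foldl_rcons. Qed.

Lemma St_prefix x n w :
  w \in St (prefix x n) <-> exists p : nat -> V, p n = w /\ forall i, i < n -> E (p i) (x i) (p i.+1).
Proof.
elim: n w => [|n IH] w.
  split=> [_|]; last by rewrite /St /= inE.
  by exists (fun _ => w).
rewrite prefixS St_rcons inE; split.
  move=> /existsP [v /andP [vS Evw]].
  have [p [pn Hp]] := (IH v).1 vS.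
  exists (fun i => if i <= n then p i else w); split; first by rewrite ltnn.
  move=> i; rewrite ltnS => lein.
  have [lt|->] : i < n \/ i = n by rewrite ltn_neqAle lein andbT; case: eqP; auto.
    by rewrite ltnW // lt; apply: Hp.
  by rewrite leqnn ltnn pn.
move=> [p [pn Hp]]; apply/existsP; exists (p n); rewrite -pn Hp // andbT.
by apply/IH; exists p; split=> // i lt; apply: Hp; apply: ltnW.
Qed.

Definition Pfrom (x : nat -> A) (i n : nat) (v : V) :=
  exists p : nat -> V, p 0 = v /\ forall k, k < n -> E (p k) (x (i + k)) (p k.+1).

Lemma Pfrom_mono x i n m v : n <= m -> Pfrom x i m v -> Pfrom x i n v.
Proof.
move=> nm [p [p0 Hp]]; exists p; split=> // k kn; apply: Hp.
exact: leq_trans kn nm.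
Qed.

Lemma konig x : (forall n, St (prefix x n) != set0) -> path_labels E x.
Proof.
move=> H.
have start : exists v, True /\ forall n, Pfrom x 0 n v.
  apply: fin_stab; first by move=> n m v; apply: Pfrom_mono.
  move=> n; have [w wS] := set0Pn _ (H n).
  have [p [pn Hp]] := (St_prefix x n w).1 wS.
  by exists (p 0); split=> //; exists p; split=> // k kn; rewrite add0n; apply: Hp.
have step : forall i v, (forall n, Pfrom x i n v) ->
    exists w, E v (x i) w /\ forall n, Pfrom x i.+1 n w.
  move=> i v Hv; apply: fin_stab; first by move=> n m w; apply: Pfrom_mono.
  move=> n; have [p [p0 Hp]] := Hv n.+1.
  exists (p 1); split; first by rewrite -p0 -(addn0 i); apply: Hp.
  exists (fun k => p k.+1); split=> // k kn.
  by rewrite addSnnS; apply: Hp.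
have [v0 [_ H0]] := start.
pose G i := {v | forall n, Pfrom x i n v}.
pose c i (g : G i) := constructive_indefinite_description _ (step i (sval g) (svalP g)).
pose nxt : forall i, G i -> G i.+1 := fun i g => exist _ (sval (c i g)) (proj2 (svalP (c i g))).
have nxtE : forall i (g : G i), E (sval g) (x i) (sval (nxt i g)).
  by move=> i g; exact: (proj1 (svalP (c i g))).
pose f := fix f i : G i := match i with 0 => exist _ v0 H0 | i'.+1 => nxt i' (f i') end.
by exists (fun i => sval (f i)) => i; apply: nxtE.
Qed.

End Graph.


Definition pb (P : Prop) : bool := if excluded_middle_informative P then true else false.
Lemma pbE (P : Prop) : pb P <-> P.
Proof. by rewrite /pb; case: excluded_middle_informative. Qed.


Lemma exists_card (T : finType) k : k <= #|T| -> exists B : {set T}, #|B| = k.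
Proof.
elim: k => [|k IH] lt; first by exists set0; rewrite cards0.
have [B cB] := IH (ltnW lt).
have [a aB] : exists a, a \notin B.
  apply: NNPP => H; move: lt; rewrite -cB.
  have -> : B = setT by apply/setP => a; rewrite inE; apply: NNPP => /negP aB; apply: H; exists a.
  by rewrite cardsT ltnn.
by exists (a |: B); rewrite cardsU1 aB cB.
Qed.


Section Cons.
Variables (A : finType) (s : seq A -> {set A}).

Definition consl (h : seq A) := forall h1 a h2, h = h1 ++ a :: h2 -> a \in s h1.

Lemma consl_nil : consl [::].
Proof. by move=> h1 a h2; case: h1. Qed.

Lemma consl_rcons h a : consl (rcons h a) <-> consl h /\ a \in s h.
Proof.
split.
  move=> H; split; last by apply: H [::] _; rewrite cats1.
  move=> h1 b h2 e; apply: (H h1 b (rcons h2 a)).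
  by rewrite e rcons_cat.
move=> [H ah] h1 b h2; case/lastP: h2 => [|h2 c].
  by rewrite cats1 => /rcons_inj [<- <-].
rewrite -rcons_cons -rcons_cat => /rcons_inj [e _]; exact: H e.
Qed.

Lemma consl_cat h1 h2 : consl (h1 ++ h2) -> consl h1.
Proof.
elim/last_ind: h2 => [|h2 a IH]; first by rewrite cats0.
by rewrite -rcons_cat => /consl_rcons [/IH].
Qed.

Definition consx (x : nat -> A) := forall j, x j \in s (prefix x j).

Lemma consl_prefix x n : consx x -> consl (prefix x n).
Proof.
move=> H; elim: n => [|n IH]; first exact: consl_nil.
by rewrite prefixS; apply/consl_rcons.
Qed.

Lemma consl_prefix_inv x n j : consl (prefix x n) -> j < n -> x j \in s (prefix x j).
Proof.
elim: n => [//|n IH]; rewrite prefixS => /consl_rcons [Hc Hx].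
rewrite ltnS leq_eqVlt => /orP [/eqP -> //|]; exact: IH.
Qed.

Lemma prefix_take x (a0 : A) n l : n <= size l -> (forall i, i < n -> x i = nth a0 l i) ->
  prefix x n = take n l.
Proof.
move=> nl H; apply: (@eq_from_nth _ a0); first by rewrite size_prefix size_take_min (minn_idPl nl).
move=> i; rewrite size_prefix => lt; rewrite nth_take // /prefix -/(mkseq x n) nth_mkseq //.
exact: H.
Qed.

Lemma extend_play h : (forall h', 0 < #|s h'|) -> consl h ->
  exists x, prefix x (size h) = h /\ consx x.
Proof.
move=> pos ch.
have [a0 _] : exists a0 : A, a0 \in s [::] by apply/set0Pn; rewrite -card_gt0.
pose pk (B : {set A}) := odflt a0 [pick a in B].
have pkP : forall h', pk (s h') \in s h'.
  by move=> h'; rewrite /pk; case: pickP => //= H; move: (pos h'); rewrite (eq_card0 H).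
pose gen n := iter n (fun g => rcons g (pk (s g))) h.
have sz : forall n, size (gen n) = size h + n.
  by elim=> [|n IH]; rewrite ?addn0 //= size_rcons IH addnS.
have ext : forall n k, exists l, gen (n + k) = gen n ++ l.
  move=> n; elim=> [|k [l IH]]; first by exists [::]; rewrite addn0 cats0.
  by exists (rcons l (pk (s (gen (n + k))))); rewrite addnS /= IH rcons_cat.
have stab : forall n m j, n <= m -> j < size (gen n) -> nth a0 (gen m) j = nth a0 (gen n) j.
  move=> n m j nm lt; rewrite -(subnKC nm); have [l ->] := ext n (m - n).
  by rewrite nth_cat lt.
pose x j := nth a0 (gen j.+1) j.
have xE : forall j N, j < size (gen N) -> x j = nth a0 (gen N) j.
  move=> j N lt; rewrite /x.
  case: (leqP j.+1 N) => le.
    by rewrite (stab j.+1 N j le) // sz addnS ltnS leq_addl.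
  rewrite -(stab N j.+1 j (ltnW le) lt) //.
have pfx : forall n N, n <= size (gen N) -> prefix x n = take n (gen N).
  move=> n N le; apply: (@prefix_take x a0 n (gen N) le) => i lt; apply: xE.
  exact: leq_trans lt le.
have ph : prefix x (size h) = h by rewrite (pfx _ 0) ?sz ?addn0 // take_size.
exists x; split=> // j.
case: (ltnP j (size h)) => lt.
  by apply: (consl_prefix_inv (n := size h)) => //; rewrite ph.
have e : j = size h + (j - size h) by rewrite subnKC.
rewrite (pfx j (j - size h)) ?sz -?e // (xE j (j - size h).+1) ?sz ?addnS -?e //.
rewrite /= nth_rcons sz -e ltnn eqxx take_oversize ?sz -?e //.
Qed.

End Cons.

Section Game.
Variables (A V : finType) (E : V -> A -> V -> bool) (X : (nat -> A) -> Prop).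
Hypothesis HX : forall x, X x <-> path_labels E x.

Definition good (v : V) := exists (x : nat -> A) (p : nat -> V), p 0 = v /\ forall i, E (p i) (x i) (p i.+1).
Definition Inf (S : {set V}) := exists v, v \in S /\ good v.
Definition W0 : {set {set V}} := [set S | pb (Inf S)].
Definition stepW (c : nat) (Ws : {set {set V}}) : {set {set V}} :=
  [set S | [exists B : {set A}, (#|B| == c.+1) && [forall b in B, dl E S b \in Ws]]].
Definition Wl (r : seq nat) := foldr stepW W0 r.

Lemma dl0 a : dl E set0 a = set0.
Proof. by apply/setP => w; rewrite !inE; apply/existsP => [[v]]; rewrite inE. Qed.

Lemma stepWP c Ws S : S \in stepW c Ws <->
  exists B : {set A}, #|B| = c.+1 /\ forall b, b \in B -> dl E S b \in Ws.
Proof.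
rewrite inE; split.
  by case/existsP => B /andP [/eqP cB /forall_inP H]; exists B.
by move=> [B [cB H]]; apply/existsP; exists B; rewrite cB eqxx; apply/forall_inP.
Qed.

Lemma W0P S : S \in W0 <-> Inf S.
Proof. by rewrite inE pbE. Qed.

Lemma Wl_nonempty r S : S \in Wl r -> S != set0.
Proof.
elim: r S => [|c r IH] S /=.
  by move/W0P => [v [vS _]]; apply/set0Pn; exists v.
move/stepWP => [B [cB H]].
have [b bB] : exists b, b \in B by apply/set0Pn; rewrite -card_gt0 cB.
apply: contra_neq (IH _ (H b bB)) => ->; exact: dl0.
Qed.

Lemma good_step v : good v -> exists a w, E v a w /\ good w.
Proof.
move=> [x [p [p0 Hp]]]; exists (x 0), (p 1); split; first by rewrite -p0 Hp.
by exists (fun i => x i.+1), (fun i => p i.+1).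
Qed.

Lemma Inf_step S : Inf S -> exists a, Inf (dl E S a).
Proof.
move=> [v [vS gv]]; have [a [w [Evw gw]]] := good_step gv.
by exists a, w; split=> //; rewrite inE; apply/existsP; exists v; rewrite vS.
Qed.

Lemma Inf_cardA S : Inf S -> 0 < #|A|.
Proof. by move=> [v [_ [x _]]]; apply/card_gt0P; exists (x 0). Qed.

Lemma Wl_bound r S : S \in Wl r -> 0 < #|A| /\ all (fun c => c < #|A|) r.
Proof.
elim: r S => [|c r IH] S /=; first by move/W0P/Inf_cardA.
move/stepWP => [B [cB H]].
have [b bB] : exists b, b \in B by apply/set0Pn; rewrite -card_gt0 cB.
have [-> ->] := IH _ (H b bB); rewrite andbT /=.
by rewrite -ltnS -cB ltnS max_card.
Qed.

Lemma path_good x p n : (forall i, E (p i) (x i) (p i.+1)) -> good (p n).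
Proof. by move=> H; exists (fun i => x (n + i)), (fun i => p (n + i)); split; [rewrite addn0|move=> i; rewrite addnS]. Qed.

Definition wins (s : seq A -> {set A}) := forall x : nat -> A, consx s x -> X x.

Lemma consl_Inf (s : seq A -> {set A}) h : (forall h', 0 < #|s h'|) -> wins s -> consl s h -> Inf (St E h).
Proof.
move=> pos ws ch; have [x [px cx]] := extend_play pos ch.
have /HX [p Hp] := ws x cx.
exists (p (size h)); split; last exact: path_good Hp.
have := (St_prefix E x (size h) (p (size h))).2; rewrite px; apply; exists p; split=> // i _.
Qed.


Lemma drop_mk (alpha : nat -> nat) N n : n < N ->
  drop n (mkseq alpha N) = alpha n :: drop n.+1 (mkseq alpha N).
Proof. by move=> lt; rewrite (drop_nth 0) ?size_mkseq // nth_mkseq. Qed.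

Lemma game_equiv (alpha : nat -> nat) N : (forall j, N <= j -> alpha j = 0) ->
  W X alpha <-> setT \in Wl (mkseq alpha N).
Proof.
move=> az; set lst := mkseq alpha N; split.
  move=> [bd [s [cs ws]]].
  have pos : forall h, 0 < #|s h| by move=> h; rewrite cs.
  suff H : forall n h, size h + n = N -> consl s h -> St E h \in Wl (drop (size h) lst).
    by have := H N [::] (add0n _) (@consl_nil _ s); rewrite drop0.
  elim=> [|n IH] h e ch.
    rewrite addn0 in e; rewrite drop_oversize ?size_mkseq ?e //=.
    by apply/W0P; apply: (consl_Inf pos).
  rewrite drop_mk; last by rewrite -e -addSnnS leq_addr.
  apply/stepWP; exists (s h); split; first exact: cs.
  move=> b bh; rewrite -St_rcons.
  have := IH (rcons h b); rewrite size_rcons; apply; first by rewrite addSnnS.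
  exact/consl_rcons.
move=> Hw; have [Apos Hall] := Wl_bound Hw.
have bd : forall j, alpha j < #|A|.
  move=> j; case: (ltnP j N) => lt; last by rewrite az.
  by move/allP: Hall; apply; rewrite /lst -[alpha j](nth_mkseq 0 alpha lt) mem_nth ?size_mkseq.
pose Inv h := St E h \in Wl (drop (size h) lst).
have exB : forall h, exists B : {set A}, #|B| = (alpha (size h)).+1 /\
    (Inv h -> forall b, b \in B -> Inv (rcons h b)).
  move=> h; case: (classic (Inv h)) => ih; last first.
    by have [B cB] := exists_card (bd (size h)); exists B; split.
  case: (ltnP (size h) N) => lt.
    move: ih; rewrite /Inv drop_mk // => /stepWP [B [cB H]].
    by exists B; split=> // _ b bB; rewrite /Inv size_rcons St_rcons; apply: H.
  move: (ih); rewrite /Inv drop_oversize ?size_mkseq // => /W0P /Inf_step [a Ia].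
  exists [set a]; split; first by rewrite cards1 az.
  move=> _ b; rewrite inE => /eqP ->; rewrite /Inv size_rcons St_rcons.
  by rewrite drop_oversize ?size_mkseq ?(leq_trans lt) //; apply/W0P.
pose s h := proj1_sig (constructive_indefinite_description _ (exB h)).
have sP : forall h, #|s h| = (alpha (size h)).+1 /\
    (Inv h -> forall b, b \in s h -> Inv (rcons h b)).
  by move=> h; rewrite /s; case: constructive_indefinite_description.
split=> //; exists s; split; first by move=> h; case: (sP h).
move=> x cx; apply/HX; apply: konig => n.
have : Inv (prefix x n).
  elim: n => [|n IH]; first by rewrite /Inv /= drop0.
  by rewrite prefixS; apply: (proj2 (sP _)) => //; apply: cx.
exact: Wl_nonempty.
Qed.

End Game.


Lemma count_card (T : finType) (P : pred T) : count P (enum T) = #|[set i | P i]|.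
Proof. rewrite cardsE cardE /enum_mem -enumT size_filter count_filter. by apply: eq_count => x /=; rewrite andbT. Qed.
Lemma count_tuple (T : Type) d (t : d.-tuple T) (P : pred T) : count P t = #|[set i | P (tnth t i)]|.
Proof. by rewrite -[in LHS](map_tnth_enum t) count_map count_card. Qed.

Section Comb.
Variable d : nat.
Notation Col := {ffun 'I_d -> bool}.
Definition c0 : Col := [ffun _ => false].
Definition cnt (c : Col) := #|[set i | c i]|.
Definition ok (p c : Col) := [&& [exists i, c i], [forall i, p i ==> c i] &
   [forall i : 'I_d, forall i' : 'I_d, (i <= i') ==> c i ==> c i']].
Definition Lseq (w : seq Col) := rev (pairmap (fun a b => cnt b - cnt a) c0 w).
Definition tw (w : seq Col) : d.-tuple nat := [tuple count (fun c : Col => c i) w | i < d].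
Definition addc (t : d.-tuple nat) (c : Col) : d.-tuple nat := [tuple tnth t i + c i | i < d].

Lemma Lseq_rcons w c : Lseq (rcons w c) = (cnt c - cnt (last c0 w)) :: Lseq w.
Proof. by rewrite /Lseq -cats1 pairmap_cat cats1 rev_rcons. Qed.

Lemma tw_rcons w c : tw (rcons w c) = addc (tw w) c.
Proof.
apply: eq_from_tnth => i; rewrite !tnth_mktuple -cats1 count_cat /=.
by rewrite addn0.
Qed.

Lemma tw_nil : tw [::] = [tuple 0 | i < d].
Proof. by apply: eq_from_tnth => i; rewrite !tnth_mktuple. Qed.

Lemma max_addc (t : d.-tuple nat) (c : Col) : (forall i, 0 < tnth t i -> c i) -> (exists i, c i) ->
  \max_(i < d) tnth (addc t c) i = (\max_(i < d) tnth t i).+1.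
Proof.
move=> H [i0 ci0]; apply/eqP; rewrite eqn_leq; apply/andP; split.
  apply/bigmax_leqP => i _; rewrite tnth_mktuple.
  have := leq_bigmax (F := fun i => tnth t i) i; case: (c i) => /=; lia.
have dpos : 0 < #|'I_d| by apply/card_gt0P; exists i0.
have [j ->] := eq_bigmax (fun i => tnth t i) dpos.
case: (posnP (tnth t j)) => tj.
  have := leq_bigmax (F := fun i => tnth (addc t c) i) i0.
  by rewrite tnth_mktuple ci0 tj => le; apply: leq_trans le; rewrite addn1.
have := leq_bigmax (F := fun i => tnth (addc t c) i) j.
by rewrite tnth_mktuple (H j tj) addn1.
Qed.

Lemma rep_addc (t : d.-tuple nat) (c : Col) : (forall i, 0 < tnth t i -> c i) -> (exists i, c i) ->
  rep (addc t c) = rcons (rep t) c.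
Proof.
move=> H ex; rewrite /rep max_addc //; set m := \max_(i < d) tnth t i.
have tm : forall i, tnth t i <= m by move=> i; exact: (leq_bigmax (F := fun i => tnth t i) i).
rewrite -addn1 iotaD map_cat /= cats1 add0n; congr rcons.
  apply/eq_in_map => p; rewrite mem_iota add0n => /andP [_ pm].
  apply/ffunP => i; rewrite !ffunE tnth_mktuple.
  have := tm i; have := H i; case: (c i) => /=; first lia.
  case: (posnP (tnth t i)) => [-> _ | ti /(_ isT)] //; lia.
apply/ffunP => i; rewrite !ffunE tnth_mktuple.
have := tm i; have := H i; case: (c i) => /=; first lia.
case: (posnP (tnth t i)) => [-> _ | ti /(_ isT)] //; lia.
Qed.


Definition valid (w : seq Col) := path ok c0 w.

Lemma okP p c : ok p c <-> [/\ exists i, c i, forall i, p i -> c i &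
   forall i i' : 'I_d, i <= i' -> c i -> c i'].
Proof.
rewrite /ok; split.
  case/and3P => /existsP ex /forallP H1 /forallP H2; split=> //.
    by move=> i; move/implyP: (H1 i).
  by move=> i i' le ci; move/forallP: (H2 i) => /(_ i') /implyP /(_ le) /implyP; apply.
move=> [[i ci] H1 H2]; apply/and3P; split.
- by apply/existsP; exists i.
- by apply/forallP => j; apply/implyP; apply: H1.
by apply/forallP => j; apply/forallP => j'; apply/implyP => le; apply/implyP; apply: H2.
Qed.

Lemma valid_rcons w c : valid (rcons w c) = valid w && ok (last c0 w) c.
Proof. exact: rcons_path. Qed.

Lemma tw_pos w : valid w -> forall i, (0 < tnth (tw w) i) = last c0 w i.
Proof.
elim/last_ind: w => [|w c IH]; first by move=> _ i; rewrite tw_nil tnth_mktuple ffunE.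
rewrite valid_rcons => /andP [vw /okP [_ H _]] i.
rewrite tw_rcons tnth_mktuple last_rcons addn_gt0 IH //.
by case: (c i) (H i); case: (last c0 w i) => //= /(_ isT).
Qed.

Lemma tw_mono w : valid w -> forall i i' : 'I_d, i <= i' -> tnth (tw w) i <= tnth (tw w) i'.
Proof.
elim/last_ind: w => [|w c IH]; first by move=> _ i i' _; rewrite tw_nil !tnth_mktuple.
rewrite valid_rcons => /andP [vw /okP [_ _ H]] i i' le.
rewrite tw_rcons !tnth_mktuple; apply: leq_add; first by have := IH vw _ _ le; rewrite !tnth_mktuple.
by case: (c i) (H i i' le) => [/(_ isT) ->|].
Qed.

Lemma rep_tw w : valid w -> rep (tw w) = w.
Proof.
elim/last_ind: w => [|w c IH].
  move=> _; rewrite tw_nil /rep.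
  suff -> : \max_(i < d) tnth [tuple 0 | _ < d] i = 0 by [].
  by apply/eqP; rewrite -leqn0; apply/bigmax_leqP => i _; rewrite tnth_mktuple.
rewrite valid_rcons => /andP [vw /okP [ex H _]].
rewrite tw_rcons rep_addc ?IH // => i; rewrite tw_pos //; exact: H.
Qed.

Lemma sorted_of_mono (t : d.-tuple nat) :
  (forall i i' : 'I_d, i <= i' -> tnth t i <= tnth t i') -> sorted leq t.
Proof.
move=> H; apply/(sortedP 0) => i; rewrite size_tuple => lt.
have lt' : i < d by exact: ltnW.
by rewrite -!(tnth_nth 0 t (Ordinal _)) ?H.
Qed.

Lemma mono_of_sorted (t : d.-tuple nat) : sorted leq t ->
  forall i i' : 'I_d, i <= i' -> tnth t i <= tnth t i'.
Proof.
move=> st i i' le; rewrite !(tnth_nth 0).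
apply: (sorted_leq_nth leq_trans leqnn) => //; rewrite inE size_tuple //.
Qed.

Lemma count0 w : valid w -> count_mem 0 (tw w) = d - cnt (last c0 w).
Proof.
move=> vw; rewrite count_tuple /cnt.
have -> : [set i | tnth (tw w) i == 0] = ~: [set i | last c0 w i].
  by apply/setP => i; rewrite !inE -tw_pos // lt0n negbK.
by have := cardsC [set i | last c0 w i]; rewrite card_ord; lia.
Qed.

Lemma countS w : valid w -> forall j, count_mem j.+1 (tw w) = nth 0 (Lseq w) j.
Proof.
elim/last_ind: w => [|w c IH].
  move=> _ j; rewrite count_tuple /= nth_nil; apply/eqP; rewrite cards_eq0; apply/eqP/setP => i.
  by rewrite tw_nil !inE tnth_mktuple.
move=> vwc; have := vwc; rewrite valid_rcons => /andP [vw /okP [_ H _]] j.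
rewrite Lseq_rcons tw_rcons count_tuple.
case: j => [|j] /=.
  rewrite /cnt -cardsDS; last first.
    by apply/subsetP => i; rewrite !inE; apply: H.
  apply: eq_card => i; rewrite !inE tnth_mktuple .
  have := H i; rewrite -tw_pos //.
  by case: (c i); case: (tnth (tw w) i) => //= n; rewrite ?addn0 ?addn1 //= => /(_ isT).
rewrite -IH // count_tuple; apply: eq_card => i; rewrite !inE tnth_mktuple.
have := H i; rewrite -tw_pos //.
by case: (c i); case: (tnth (tw w) i) => //= n; rewrite ?addn0 ?addn1 // => /(_ isT).
Qed.

Lemma tw_le w i : tnth (tw w) i <= size w.
Proof. by rewrite tnth_mktuple count_size. Qed.

Lemma rep_valid (t : d.-tuple nat) : sorted leq t -> valid (rep t) /\ tw (rep t) = t.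
Proof.
move: {2}(\max_(i < d) tnth t i) (leqnn (\max_(i < d) tnth t i)) => n.
elim: n t => [|n IH] t le st.
  have t0 : forall i, tnth t i = 0.
    by move=> i; apply/eqP; rewrite -leqn0; apply: leq_trans le; apply: (leq_bigmax (F := fun i => tnth t i)).
  have -> : rep t = [::].
    by rewrite /rep; move: le; rewrite leqn0 => /eqP ->.
  split=> //; apply: eq_from_tnth => i; by rewrite tw_nil tnth_mktuple t0.
pose c : Col := [ffun i => 0 < tnth t i].
pose t' : d.-tuple nat := [tuple (tnth t i).-1 | i < d].
have tE : t = addc t' c.
  by apply: eq_from_tnth => i; rewrite !tnth_mktuple ffunE; case: (tnth t i) => // k; rewrite addn1.
have st' : sorted leq t'.
  apply: sorted_of_mono => i i' lei; rewrite !tnth_mktuple.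
  by have := mono_of_sorted st lei; lia.
have le' : \max_(i < d) tnth t' i <= n.
  apply/bigmax_leqP => i _; rewrite tnth_mktuple.
  have h1 : tnth t i <= n.+1 := leq_trans (leq_bigmax (F := fun i => tnth t i) i) le; lia.
have [vr tr] := IH t' le' st'.
have Hc : forall i, 0 < tnth t' i -> c i by move=> i; rewrite tnth_mktuple ffunE; lia.
case: (posnP (\max_(i < d) tnth t i)) => mx.
  have t0 : forall i, tnth t i = 0.
    by move=> i; apply/eqP; rewrite -leqn0 -mx; apply: (leq_bigmax (F := fun i => tnth t i)).
  have -> : rep t = [::] by rewrite /rep mx.
  split=> //; apply: eq_from_tnth => i; by rewrite tw_nil tnth_mktuple t0.
have ex : exists i, c i.
  apply/existsP; move: mx; apply: contraTT => /existsPn H.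
  rewrite lt0n negbK -leqn0; apply/bigmax_leqP => i _.
  by move: (H i); rewrite ffunE lt0n negbK => /eqP ->.
have rE : rep t = rcons (rep t') c by rewrite {1}tE rep_addc.
rewrite rE valid_rcons vr tw_rcons tr -tE; split=> //.
apply/okP; split=> //.
  by move=> i; rewrite -tw_pos // tr; apply: Hc.
move=> i i' lei; rewrite !ffunE => ti.
exact: leq_trans ti (mono_of_sorted st lei).
Qed.

End Comb.


Lemma sum_count_mem (s : seq nat) n : \sum_(i < n) count_mem (nat_of_ord i) s = count (fun x => x < n) s.
Proof.
elim: n => [|n IH]; first by rewrite big_ord0; apply/esym/eqP; rewrite eqn0Ngt -has_count; apply/hasP => [[]].
rewrite big_ord_recr /= IH -count_predUI.
rewrite (@eq_count _ (predI _ _) pred0); last by move=> x /=; case: ltngtP.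
rewrite count_pred0 addn0; apply: eq_count => x /=; rewrite ltnS; by case: ltngtP.
Qed.

Section Reg.
Variables (A V : finType) (E : V -> A -> V -> bool) (X : (nat -> A) -> Prop).
Hypothesis HX : forall x, X x <-> path_labels E x.
Variables (k d : nat).

Notation Col := {ffun 'I_d -> bool}.
Definition Q := option ({set {set V}} * Col)%type.
Definition q0 : Q := Some (W0 E, c0 d).
Definition dlt (q : Q) (c : Col) : Q :=
  if q is Some (Ws, p) then (if ok p c then Some (stepW E (cnt c - cnt p) Ws, c) else None) else None.
Definition F : {set Q} := [set q | if q is Some (Ws, l) then (d <= k) && (setT \in stepW E (d - cnt l) Ws) else false].

Lemma run (w : seq Col) : foldl dlt q0 w = if valid w then Some (Wl E (Lseq w), last (c0 d) w) else None.
Proof.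
elim/last_ind: w => [//|w c IH].
rewrite foldl_rcons IH valid_rcons Lseq_rcons last_rcons.
by case: (valid w) => //=; case: ok.
Qed.

Lemma mk_count (w : seq Col) : valid w ->
  mkseq (fun j => count_mem j (tw w)) (size w).+1 = (d - cnt (last (c0 d) w)) :: Lseq w.
Proof.
move=> vw; apply: (@eq_from_nth _ 0).
  by rewrite size_mkseq /= /Lseq size_rev size_pairmap.
move=> i; rewrite size_mkseq => lt; rewrite nth_mkseq //.
by case: i lt => [|j] _ /=; [rewrite count0 | rewrite countS].
Qed.

Lemma count_big (w : seq Col) j : (size w).+1 <= j -> count_mem j (tw w) = 0.
Proof.
move=> le; rewrite count_tuple; apply/eqP; rewrite cards_eq0; apply/eqP/setP => i.
rewrite !inE; have := tw_le w i; case: eqP => // ->; lia.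
Qed.

Lemma lang (w : seq Col) : (exists t, (exists y, W X y /\ sum_le y k /\ is_nu y t) /\ rep t = w) <->
  valid w /\ d <= k /\ setT \in stepW E (d - cnt (last (c0 d) w)) (Wl E (Lseq w)).
Proof.
split.
  move=> [t [[y [Wy [sl [st yE]]]] rw]].
  have [vw tw_t] := rep_valid st; rewrite rw in vw tw_t; subst t.
  split=> //; split.
    have := sl (size w).+1; rewrite (eq_bigr (fun i : 'I_ _ => count_mem (nat_of_ord i) (tw w))); last by move=> i _; rewrite yE.
    rewrite sum_count_mem count_tuple.
    have -> : #|[set i | tnth (tw w) i < (size w).+1]| = d.
      by rewrite -[RHS](card_ord d) -cardsT; apply: eq_card => i; rewrite !inE ltnS tw_le.
    by [].
  rewrite -[stepW _ _ _]/(Wl E (_ :: _)) -mk_count //.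
  rewrite -(@eq_mkseq _ y); last by move=> j; rewrite yE.
  by apply/(game_equiv HX (N := (size w).+1)) => // j le; rewrite yE count_big.
move=> [vw [dk Hw]].
exists (tw w); split; last exact: rep_tw.
exists (fun j => count_mem j (tw w)); split; last split.
- rewrite -[stepW _ _ _]/(Wl E (_ :: _)) -mk_count // in Hw.
  apply/(game_equiv HX (N := (size w).+1)) => // j le; exact: count_big.
- move=> n; rewrite (eq_bigr (fun i : 'I_ _ => count_mem (nat_of_ord i) (tw w))) //.
  rewrite sum_count_mem; apply: leq_trans dk; apply: leq_trans (count_size _ _) _; by rewrite size_tuple.
split=> //; apply: sorted_of_mono; exact: tw_mono.
Qed.

End Reg.


Lemma weak (A V : finType) (E : V -> A -> V -> bool) (X : (nat -> A) -> Prop) :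
  (forall x, X x <-> path_labels E x) -> weakly_1_codable (W X).
Proof.
move=> HX k d; exists (option ({set {set V}} * {ffun 'I_d -> bool})%type), (q0 E d), (@dlt _ _ E d), (F E k d) => w.
rewrite (lang HX) run; case: (valid w) => /=; rewrite ?inE; last by split=> // [[]].
split; first by move=> [_ [-> ->]].
by move=> /andP [dk Hs].
Qed.


Lemma St_cat (A V : finType) (E : V -> A -> V -> bool) h l : St E (h ++ l) = foldl (dl E) (St E h) l.
Proof. by rewrite /St foldl_cat. Qed.

Lemma foldl_dl0 (A V : finType) (E : V -> A -> V -> bool) l : foldl (dl E) set0 l = set0.
Proof. by elim: l => //= a l; rewrite dl0. Qed.

Lemma St_take (A V : finType) (E : V -> A -> V -> bool) h n : St E h != set0 -> St E (take n h) != set0.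
Proof.
rewrite -[in St E h](cat_take_drop n h) St_cat; apply: contra_neq => ->; exact: foldl_dl0.
Qed.

Section Tree.
Variables (A V : finType) (E : V -> A -> V -> bool) (X : (nat -> A) -> Prop).
Hypothesis HX : forall x, X x <-> path_labels E x.
Variables (s : seq A -> {set A}) (y : nat -> nat) (n : nat).
Hypothesis cs : forall h, #|s h| = (y (size h)).+1.

Definition goodnode := exists h0 p a b u v, a != b /\
  consl s (h0 ++ p ++ a :: u) /\ consl s (h0 ++ p ++ b :: v) /\
  St E (h0 ++ p ++ a :: u) = St E h0 /\ St E (h0 ++ p ++ b :: v) = St E h0.

Lemma tree K : forall (C : {set {set V}}) h js, #|C| <= K -> K < size js -> consl s h ->
  sorted ltn js -> all (fun j => [&& size h <= j, j < n & 0 < y j]) js ->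
  (forall u, consl s (h ++ u) -> size (h ++ u) <= n -> St E (h ++ u) \in C) -> goodnode.
Proof.
have pos : forall h, 0 < #|s h| by move=> h; rewrite cs.
elim: K => [|K IH] C h [//|j0 js'] cC ljs ch sjs ajs col.
  have /and3P [hj jn _] := allP ajs j0 (mem_head _ _).
  have := col [::]; rewrite cats0 => /(_ ch) /(_ (leq_trans hj (ltnW jn))).
  by move: cC; rewrite leqn0 cards_eq0 => /eqP ->; rewrite inE.
have /and3P [hj jn yj] := allP ajs j0 (mem_head _ _).
have [x [px cx]] := @extend_play _ s h pos ch.
pose p := [seq x i | i <- iota (size h) (j0 - size h)].
have h1E : prefix x j0 = h ++ p.
  by rewrite /prefix -(subnKC hj) iotaD map_cat add0n -/(prefix x (size h)) px.
have ch1 : consl s (h ++ p) by rewrite -h1E; exact: consl_prefix.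
have sh1 : size (h ++ p) = j0 by rewrite -h1E size_prefix.
have [a [b [ah1 bh1 ab]]] : exists a b, [/\ a \in s (h ++ p), b \in s (h ++ p) & a != b].
  by apply/card_gt1P; rewrite cs sh1 ltnS.
have Hc : forall c, c \in s (h ++ p) ->
    ~ (exists uc, [/\ consl s (h ++ p ++ c :: uc), size (h ++ p ++ c :: uc) <= n &
                    St E (h ++ p ++ c :: uc) = St E h]) -> goodnode.
  move=> c ch1c nex.
  have hC : St E h \in C.
    by have := col [::]; rewrite cats0; apply=> //; exact: (leq_trans hj (ltnW jn)).
  apply: (IH (C :\ St E h) (rcons (h ++ p) c) js').
  - by move: cC; rewrite (cardsD1 (St E h)) hC.
  - by [].
  - exact/consl_rcons.
  - exact: path_sorted sjs.
  - apply/allP => j jjs; have /and3P [_ -> ->] : [&& size h <= j, j < n & 0 < y j] by apply: (allP ajs); rewrite inE jjs orbT.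
    rewrite size_rcons sh1 andbT.
    by have := allP (order_path_min ltn_trans sjs) j jjs; rewrite andbT.
  move=> u; have -> : rcons (h ++ p) c ++ u = h ++ (p ++ c :: u) by rewrite -cats1 -!catA.
  move=> cu su; rewrite !inE; apply/andP; split; last exact: col.
  by apply/negP => /eqP e; apply: nex; exists u.
case: (classic (exists ua, [/\ consl s (h ++ p ++ a :: ua), size (h ++ p ++ a :: ua) <= n &
                    St E (h ++ p ++ a :: ua) = St E h])) => [[ua [ca sa ea]]|]; last exact: Hc.
case: (classic (exists ub, [/\ consl s (h ++ p ++ b :: ub), size (h ++ p ++ b :: ub) <= n &
                    St E (h ++ p ++ b :: ub) = St E h])) => [[ub [cb sb eb]]|]; last exact: Hc.
by exists h, p, a, b, ua, ub.
Qed.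


Lemma no_goodnode : countable_set X -> wins X s -> goodnode -> False.
Proof.
have pos : forall h, 0 < #|s h| by move=> h; rewrite cs.
move=> [f cf] ws [h0 [p [a [b [u [v [ab [cu [cv [eu ev]]]]]]]]]].
have [a0 _] : exists a0 : A, a0 \in s [::] by apply/set0Pn; rewrite -card_gt0.
have ch0 : consl s h0 by apply: consl_cat cu.
have [w0 [w0T _]] := consl_Inf HX pos ws ch0.
set T := St E h0 in eu ev w0T.
pose B1 := p ++ a :: u ++ (p ++ b :: v).
pose B0 := p ++ b :: v ++ (p ++ a :: u).
pose L := size B1.
have sB0 : size B0 = L by rewrite /L /B0 /B1 !size_cat /= !size_cat /=; lia.
have Lpos : size p < L by rewrite /L /B1 size_cat /=; lia.
have fB : forall bb : bool, foldl (dl E) T (if bb then B1 else B0) = T.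
  have eu' : foldl (dl E) T (p ++ a :: u) = T by rewrite /T -St_cat eu.
  have ev' : foldl (dl E) T (p ++ b :: v) = T by rewrite /T -St_cat ev.
  by case; rewrite /B1 /B0 -cat_cons catA foldl_cat ?eu' ?ev'.
pose blk (bb : bool) := if bb then B1 else B0.
have sblk : forall bb, size (blk bb) = L by case.
pose zl (bs : nat -> bool) k := flatten (mkseq (fun i => blk (bs i)) k).
have zlS : forall bs k, zl bs k.+1 = zl bs k ++ blk (bs k) by move=> bs k; rewrite /zl mkseqS flatten_rcons.
have szl : forall bs k, size (zl bs k) = k * L.
  by move=> bs; elim=> [|k IH]; rewrite ?zlS ?size_cat ?IH ?sblk ?mulSn //; lia.
have fzl : forall bs k, foldl (dl E) T (zl bs k) = T.
  by move=> bs; elim=> [|k IH] //; rewrite zlS foldl_cat IH; apply: fB.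
have stab : forall bs k k' i, i < size (zl bs k) -> k <= k' -> nth a0 (zl bs k') i = nth a0 (zl bs k) i.
  move=> bs k k' i lt le; rewrite -(subnKC le); elim: (k' - k) => [|m IH]; first by rewrite addn0.
  have lt' : i < size (zl bs (k + m)).
    by apply: leq_trans lt _; rewrite !szl leq_mul2r leq_addr orbT.
  by rewrite addnS zlS nth_cat lt' IH.
clearbody zl.
pose xb bs j := nth a0 (h0 ++ zl bs j.+1) j.
have Xxb : forall bs, X (xb bs).
  move=> bs; apply/HX; apply: konig => m.
  have -> : prefix (xb bs) m = take m (h0 ++ zl bs m).
    apply: (@prefix_take _ _ a0); first by rewrite size_cat szl; nia.
    move=> i lt; rewrite /xb !nth_cat; case: ltnP => // le.
    symmetry; apply: stab; last by [].
    by rewrite szl; nia.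
  by apply: St_take; rewrite St_cat fzl; apply/set0Pn; exists w0.
pose dec (x : nat -> A) i := x (size h0 + (i * L + size p)) == a.
have decE : forall bs i, dec (xb bs) i = bs i.
  move=> bs i; rewrite /dec /xb nth_cat ltnNge leq_addr /= addKn.
  rewrite (stab _ i.+1); last first.
  - by have := Lpos; nia.
  - by rewrite szl mulSn [L + _]addnC ltn_add2l.
  rewrite zlS nth_cat szl ltnNge leq_addr /= addKn.
  by case: (bs i); rewrite /blk /B1 /B0 nth_cat ltnn subnn /= ?eqxx // eq_sym (negbTE ab).
pose bstar i := ~~ dec (f i) i.
have [m fm] := cf _ (Xxb bstar).
by have := decE bstar m; rewrite -fm /bstar; case: (dec (f m) m).
Qed.

End Tree.

Lemma fcd (A V : finType) (E : V -> A -> V -> bool) (X : (nat -> A) -> Prop) :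
  (forall x, X x <-> path_labels E x) -> countable_set X -> finite_coding_dimension (W X).
Proof.
move=> HX cX; exists (#|A| * #|{set V}|) => y [bd [s [cs ws]]] n.
rewrite leqNgt; apply/negP => lt.
pose js := [seq j <- iota 0 n | 0 < y j].
have sle : \sum_(i < n) y i <= #|A| * size js.
  rewrite /js size_filter; clear lt js.
  elim: n => [|n IH]; first by rewrite big_ord0.
  have -> : iota 0 n.+1 = iota 0 n ++ [:: n] by rewrite -addn1 iotaD.
  rewrite big_ord_recr count_cat mulnDr; apply: leq_add => // /=.
  have := bd n; case: (posnP (y n)) => [->|_] /=; lia.
have Klt : #|{set V}| < size js.
  rewrite ltnNge; apply/negP => le; have := leq_mul (leqnn #|A|) le; lia.
apply: (no_goodnode HX cs cX ws).
apply: (tree (n := n) cs (K := #|{set V}|) (C := setT) (h := [::]) (js := js)) => //.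
- by rewrite cardsT.
- exact: consl_nil.
- by apply: sorted_filter; [exact: ltn_trans | exact: iota_ltn_sorted].
- by apply/allP => j; rewrite mem_filter mem_iota => /andP [-> /andP [_ ->]].
by move=> *; rewrite inE.
Qed.


Theorem mainTheorem15 (A : finType) (X : (nat -> A) -> Prop) :
  sofic X ->
  weakly_1_codable (W X) /\ (countable_set X -> one_codable (W X)).
Proof.
move=> [V [E HX]]; split; first exact: weak HX.
by move=> cX; split; [exact: weak HX | exact: fcd HX cX].
Qed.
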